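(* Let $G$ be an innately transitive permutation group on a finite set $\Omega$ with a nonabelian plinth $M=T_1\times\cdots\times T_k$, where $T_1,\ldots,T_k$ are the (pairwise isomorphic, nonabelian) simple normal subgroups of $M$, and let $\sigma_i:M\to T_i$ be the $i$-th projection. Let $\omega\in\Omega$ and let $\{K_1,\ldots,K_\ell\}$ be a Cartesian system of subgroups in $M$ with respect to $\omega$. Then for all $i\in\{1,\ldots,k\}$ and all $j\in\{1,\ldots,\ell\}$, $$T_i=\sigma_i(K_j)\Bigl(\bigcap_{m\ne j}\sigma_i(K_m)\Bigr).$$
   Context: A finite permutation group is innately transitive if it has a transitive minimal normal subgroup, called a plinth. If $G$ is innately transitive on $\Omega$ with plinth $M$ and $\omega\in\Omega$, a Cartesian system of subgroups in $M$ with respect to $\omega$ is a set $\{K_1,\ldots,K_\ell\}$ of subgroups of $M$ which is invariant under conjugation by $G_\omega$ and satisfies (i) $\bigcap_{i=1}^\ell K_i=M_\omega$ and (ii) $K_i\bigl(\bigcap_{j\ne i}K_j\bigr)=M$ for all $i$ (an empty intersection being $M$). *)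

(* Defs.v *)
From mathcomp Require Import all_boot all_fingroup all_solvable.
Set Implicit Arguments. Unset Strict Implicit. Unset Printing Implicit Defensive.
Local Open Scope group_scope.

(* For M = T_0 x ... x T_(k-1) (internal direct product), the i-th projection
   sigma_i : M -> T_i sends x = t_0 * ... * t_(k-1) to t_i. *)
Definition dproj (gT : finGroupType) (k : nat) (T : 'I_k -> {group gT})
  (i : 'I_k) (x : gT) : gT :=
  divgr (T i) (\prod_(j < k | j != i) T j) x.

(* Main.v *)
Require Import Defs.
From mathcomp Require Import all_boot all_fingroup all_solvable.
Local Open Scope group_scope.

Theorem mainTheorem4 (Omega : finType) (G M : {group {perm Omega}}) (k : nat)
  (T : 'I_k -> {group {perm Omega}}) (w : Omega)
  (KS : {set {group {perm Omega}}}) :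
  (* G innately transitive with plinth M *)
  minnormal M G ->
  [transitive M, on [set: Omega] | 'P] ->
  (* M nonabelian, M = T_1 x ... x T_k with T_i pairwise isomorphic nonabelian simple *)
  ~~ abelian M ->
  \big[dprod/1]_(i < k) T i = M ->
  (forall i, simple (T i)) ->
  (forall i, ~~ abelian (T i)) ->
  (forall i j, T i \isog T j) ->
  (* KS is a Cartesian system of subgroups in M with respect to w *)
  (forall K, K \in KS -> K \subset M) ->
  (forall g K, g \in 'C_G[w | 'P] -> K \in KS -> (K :^ g)%G \in KS) ->
  \bigcap_(K in KS) gval K = 'C_M[w | 'P] ->
  (forall K, K \in KS -> K * (M :&: \bigcap_(K' in KS | K' != K) gval K') = M) ->
  forall (i : 'I_k) (K : {group {perm Omega}}), K \in KS ->
    T i :=: (dproj T i @: K) *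
          (T i :&: \bigcap_(K' in KS | K' != K) (dproj T i @: K')).
Proof.
move=> _ _ _ defM _ _ _ sKM _ _ HC i K KSK.
have defM' := defM; rewrite (bigD1 i) //= in defM'.
move/dprodP: defM' => [[Ti P defTi defP] defTP cTP tiTP].
have eTi : Ti = T i by apply/val_inj.
subst Ti.
rewrite defP in defTP cTP tiTP.
have eP : \prod_(j < k | j != i) T j = P by apply: bigdprodW defP.
rewrite /dproj eP.
set f := divgr (T i) P.
have compl : P \in [complements to T i in M] by apply/complP.
have fM := divgrM compl cTP.
have fT : forall x, x \in M -> f x \in T i.
  by move=> x Mx; apply: mem_divgr; rewrite defTP.
have sTM : T i \subset M by rewrite -defTP mulG_subl.
apply/eqP; rewrite eqEsubset; apply/andP; split; last first.
  apply: mul_subG; last exact: subsetIl.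
  apply/subsetP=> y /imsetP[x Kx ->]; apply: fT; exact: (subsetP (sKM K KSK)).
apply/subsetP=> t Tt.
have Mt : t \in M by apply: (subsetP sTM).
move: Mt; rewrite -{1}(HC K KSK) => /mulsgP[a n Ka /setIP[Mn /bigcapP Nn] et].
have Ma : a \in M by apply: (subsetP (sKM K KSK)).
rewrite -(divgr_id P Tt) et.
have fan : divgr (T i) P (a * n) = f a * f n by apply: fM.
rewrite fan; apply: mem_mulg; first exact: imset_f.
rewrite inE fT //=; apply/bigcapP=> K' KK'; apply: imset_f; exact: Nn KK'.
Qed.
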